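(* Let $s\in[-\infty,0]$, let $\rho,\rho'$ be $2\times2$ density matrices with $\mathrm{Tr}[\rho^2]=\mathrm{Tr}[\rho'^2]$, and let $X,X'$ be nonzero $2\times 2$ Hermitian matrices with $[\rho',X']\neq 0$. Let $\{|\psi_1\rangle,|\psi_2\rangle\}$ and $\{|\psi'_1\rangle,|\psi'_2\rangle\}$ be orthonormal eigenbases of $\rho$ and $\rho'$ respectively, with eigenvalues in descending order. Then $I^s(\rho,X)=\eta\, I^s(\rho',X')$, where $\eta=\dfrac{|\langle\psi_1|X|\psi_2\rangle|^2}{|\langle\psi'_1|X'|\psi'_2\rangle|^2}$.
   Context: For a density matrix $\rho=\sum_{i}\lambda_i|\psi_i\rangle\langle\psi_i|$ on $\mathbb{C}^d$ (orthonormal eigenbasis, $\lambda_1\ge\cdots\ge\lambda_d\ge0$): for $-\infty<s<0$ and $a_1,a_2>0$ let $m_s(a_1,a_2)=\left(\frac{a_1^s+a_2^s}{2}\right)^{1/s}$; $m_0(a_1,a_2)=\sqrt{a_1a_2}$; $m_{-\infty}(a_1,a_2)=\min\{a_1,a_2\}$; and $m_s(a,0)=m_s(0,a)=m_s(0,0)=0$. Define $\zeta_\rho^s(X,Y)=\mathrm{Tr}[\rho X^\dagger Y]-\sum_{i,j} m_s(\lambda_i,\lambda_j)\langle\psi_i|X^\dagger|\psi_j\rangle\langle\psi_j|Y|\psi_i\rangle$ and $I^s(\rho,X)=\zeta_\rho^s(X,X)$. *)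

(* Defs.v *)
From HB Require Import structures.
From mathcomp Require Import all_boot all_order all_algebra.
From mathcomp Require Import reals constructive_ereal ereal exp.
From mathcomp Require Import complex.

Set Implicit Arguments.
Unset Strict Implicit.
Unset Printing Implicit Defensive.

Import Order.TTheory GRing.Theory Num.Theory.
Local Open Scope ring_scope.

Section QDefs.
Variable R : realType.
Local Notation C := R[i].

Definition RtoC (x : R) : C := Complex x 0.

Definition dagger m n (A : 'M[C]_(m, n)) : 'M[C]_(n, m) := map_mx Num.conj A^T.

Definition is_hermitian n (A : 'M[C]_n) : Prop := dagger A = A.

Definition density_matrix n (rho : 'M[C]_n) : Prop :=
  [/\ is_hermitian rho,
      (forall v : 'cV[C]_n, 0 <= (dagger v *m rho *m v) 0 0)
    & \tr rho = 1].

Definition braket n (u : 'cV[C]_n) (A : 'M[C]_n) (v : 'cV[C]_n) : C :=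
  (dagger u *m A *m v) 0 0.

Definition ordered_eigenbasis n (rho : 'M[C]_n) (lam : 'I_n -> R)
    (psi : 'I_n -> 'cV[C]_n) : Prop :=
  [/\ (forall i j, braket (psi i) 1%:M (psi j) = (i == j)%:R),
      (forall i, rho *m psi i = RtoC (lam i) *: psi i)
    & (forall i j : 'I_n, (i <= j)%N -> lam j <= lam i)].

Definition mean_s (s : \bar R) (a1 a2 : R) : R :=
  if (a1 == 0) || (a2 == 0) then 0 else
  match s with
  | -oo%E => Num.min a1 a2
  | (r%:E)%E => if r == 0 then Num.sqrt (a1 * a2)
                else ((a1 `^ r + a2 `^ r) / 2) `^ (r^-1)
  | +oo%E => 0 (* not used: s <= 0 *)
  end.

Definition zeta_s n (s : \bar R) (rho : 'M[C]_n) (lam : 'I_n -> R)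
    (psi : 'I_n -> 'cV[C]_n) (X Y : 'M[C]_n) : C :=
  \tr (rho *m dagger X *m Y)
  - \sum_(i < n) \sum_(j < n)
      RtoC (mean_s s (lam i) (lam j))
      * braket (psi i) (dagger X) (psi j) * braket (psi j) Y (psi i).

Definition I_s n (s : \bar R) (rho : 'M[C]_n) (lam : 'I_n -> R)
    (psi : 'I_n -> 'cV[C]_n) (X : 'M[C]_n) : C :=
  zeta_s s rho lam psi X X.

End QDefs.

(* Main.v *)
Require Import Defs.
From HB Require Import structures.
From mathcomp Require Import all_boot all_order all_algebra.
From mathcomp Require Import reals constructive_ereal ereal exp.
From mathcomp Require Import complex.
From mathcomp Require Import ring lra.
Import Order.TTheory GRing.Theory Num.Theory.
Local Open Scope ring_scope.

Section S.
Variable R : realType.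
Local Notation C := R[i].

Lemma RtoCD (x y : R) : RtoC (x + y) = RtoC x + RtoC y.
Proof. by apply/eqP; rewrite eq_complex /= addr0 !eqxx. Qed.
Lemma RtoCB (x y : R) : RtoC (x - y) = RtoC x - RtoC y.
Proof. by apply/eqP; rewrite eq_complex /= subr0 !eqxx. Qed.
Lemma RtoCM (x y : R) : RtoC (x * y) = RtoC x * RtoC y.
Proof. by apply/eqP; rewrite eq_complex /= !mulr0 !mul0r subr0 addr0 !eqxx. Qed.
Lemma RtoC_inj : injective (@RtoC R).
Proof. by move=> x y []. Qed.

Lemma daggerM m n p (A : 'M[C]_(m,n)) (B : 'M[C]_(n,p)) :
  dagger (A *m B) = dagger B *m dagger A.
Proof. by rewrite /dagger trmx_mul map_mxM. Qed.

Lemma daggerK m n (A : 'M[C]_(m,n)) : dagger (dagger A) = A.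
Proof.
by apply/matrixP => i j; rewrite /dagger !mxE conjCK.
Qed.

Lemma mean_diag (s : \bar R) (l : R) : (s <= 0)%E -> 0 <= l -> mean_s s l l = l.
Proof.
move=> hs hl; rewrite /mean_s orbb.
have [->|l0] := eqVneq l 0; first by [].
case: s hs => [r| |] //= hr.
- have [_|r0] := eqVneq r 0; first by rewrite -expr2 sqrtr_sqr ger0_norm.
  have -> : (l `^ r + l `^ r) / 2 = l `^ r.
    by rewrite -mulr2n -(mulr_natr (l `^ r)) mulfK ?pnatr_eq0.
  by rewrite -powRrM mulfV // powRr1.

- by rewrite minxx.
Qed.


Lemma ord2 (i : 'I_2) : i = 0 \/ i = 1.
Proof. by case: i => [[|[|//]] ?]; [left|right]; apply/val_inj. Qed.

Section Eig.
Variables (rho : 'M[C]_2) (lam : 'I_2 -> R) (psi : 'I_2 -> 'cV[C]_2).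
Hypotheses (Hd : density_matrix rho) (He : ordered_eigenbasis rho lam psi).

Definition U : 'M[C]_2 := \matrix_(i, j) psi j i 0.
Definition D : 'M[C]_2 := diag_mx (\row_i RtoC (lam i)).

Lemma braketE A i j : braket (psi i) A (psi j) = (dagger U *m A *m U) i j.
Proof.
rewrite /braket !mxE; apply: eq_bigr => k _; rewrite !mxE; congr (_ * _).
by apply: eq_bigr => l _; rewrite !mxE.
Qed.

Lemma UdU : dagger U *m U = 1%:M.
Proof.
case: He => hon _ _; apply/matrixP => i j.
by rewrite -[dagger U *m U](congr1 (mulmx^~ U) (mulmx1 (dagger U))) -braketE hon mxE.
Qed.

Lemma UUd : U *m dagger U = 1%:M.
Proof. exact: mulmx1C UdU. Qed.

Lemma rhoU : rho *m U = U *m D.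
Proof.
case: He => _ hev _; apply/matrixP => i j.
rewrite /D mul_mx_diag !mxE.
have := congr1 (fun M : 'cV[C]_2 => M i 0) (hev j); rewrite !mxE mulrC => <-.
by apply: eq_bigr => k _; rewrite !mxE.
Qed.

Lemma rhoE : rho = U *m D *m dagger U.
Proof. by rewrite -rhoU -mulmxA UUd mulmx1. Qed.


Lemma UdrhoU : dagger U *m rho *m U = D.
Proof. by rewrite -mulmxA rhoU mulmxA UdU mul1mx. Qed.

Lemma lam_ge0 i : 0 <= lam i.
Proof.
case: Hd => _ hpsd _; have := hpsd (psi i).
have -> : (dagger (psi i) *m rho *m psi i) 0 0 = braket (psi i) rho (psi i) by [].
by rewrite braketE UdrhoU /D !mxE eqxx mulr1n lecE /= => /andP[].
Qed.

Lemma trE M : \tr (rho *m M) = \tr (D *m (dagger U *m M *m U)).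
Proof.
by rewrite {1}rhoE -!mulmxA mxtrace_mulC -!mulmxA.
Qed.

Lemma big2 (f : 'I_2 -> C) : \sum_i f i = f 0 + f 1.
Proof.
rewrite !big_ord_recl big_ord0 addr0; congr (f _ + f _); exact/val_inj.
Qed.

Lemma tr1 : \tr rho = RtoC (lam 0 + lam 1).
Proof.
rewrite -[rho]mulmx1 trE mulmx1 UdU mulmx1 mxtrace_diag big2 !mxE.
by rewrite RtoCD.
Qed.

Lemma tr2 : \tr (rho *m rho) = RtoC (lam 0 ^+ 2 + lam 1 ^+ 2).
Proof.
rewrite trE UdrhoU /D mulmx_diag mxtrace_diag big2 !mxE.
by rewrite RtoCD !expr2 !RtoCM.
Qed.


Definition Y (X : 'M[C]_2) := dagger U *m X *m U.

Lemma I_formula s X : (s <= 0)%E -> is_hermitian X ->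
  I_s s rho lam psi X = RtoC (lam 0 + lam 1 - mean_s s (lam 0) (lam 1)
     - mean_s s (lam 1) (lam 0)) * (Y X 0 1 * Y X 1 0).
Proof.
move=> hs hX; rewrite /I_s /zeta_s hX -mulmxA trE.
have -> : dagger U *m (X *m X) *m U = Y X *m Y X.
  by rewrite /Y !mulmxA -[_ *m U *m dagger U]mulmxA UUd mulmx1.
rewrite !big2 !braketE -/(Y X).
set M := Y X; clearbody M.
rewrite /mxtrace big2 mul_diag_mx !mxE !big2.
rewrite !mean_diag ?lam_ge0 // !RtoCB !RtoCD.
ring.
Qed.


Lemma Y_herm X : is_hermitian X -> Y X 1 0 = (Y X 0 1)^*.
Proof.
move=> hX; have : dagger (Y X) = Y X by rewrite /Y !daggerM daggerK hX mulmxA.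
by move/(congr1 (fun M : 'M[C]_2 => M 1 0)); rewrite /dagger !mxE => <-.
Qed.

Lemma comm0 X : is_hermitian X -> Y X 0 1 = 0 -> rho *m X - X *m rho = 0.
Proof.
move=> hX h01; have h10 : Y X 1 0 = 0 by rewrite Y_herm // h01 conjC0.
have eX : X = U *m Y X *m dagger U.
  by rewrite /Y !mulmxA UUd mul1mx -mulmxA UUd mulmx1.
set M := Y X in h01 h10 eX *; clearbody M.
have DY : D *m M = M *m D.
  apply/matrixP => i j; rewrite /D mul_diag_mx mul_mx_diag !mxE.
  by case: (ord2 i) => ->; case: (ord2 j) => ->; rewrite ?h01 ?h10 ?mulr0 ?mul0r // mulrC.
rewrite rhoE eX !mulmxA -[_ *m dagger U *m U]mulmxA UdU mulmx1.
rewrite -[U *m M *m dagger U *m U]mulmxA UdU mulmx1.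
by rewrite -!mulmxA (mulmxA D) DY -mulmxA subrr.
Qed.

End Eig.

Lemma eig_eq (rho rho' : 'M[C]_2) lam lam' psi psi' :
  density_matrix rho -> density_matrix rho' ->
  \tr (rho *m rho) = \tr (rho' *m rho') ->
  ordered_eigenbasis rho lam psi -> ordered_eigenbasis rho' lam' psi' ->
  lam 0 = lam' 0 /\ lam 1 = lam' 1.
Proof.
move=> Hd Hd' h2 He He'.
have t1 := @tr1 _ _ _ He; have t1' := @tr1 _ _ _ He'.
have t2 := @tr2 _ _ _ He; have t2' := @tr2 _ _ _ He'.
case: Hd => _ _ ht; case: Hd' => _ _ ht'.
have s1 : lam 0 + lam 1 = lam' 0 + lam' 1.
  by apply: RtoC_inj; rewrite -t1 -t1' ht ht'.
have s2 : lam 0 ^+ 2 + lam 1 ^+ 2 = lam' 0 ^+ 2 + lam' 1 ^+ 2.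
  by apply: RtoC_inj; rewrite -t2 -t2' h2.
case: He => _ _ o; case: He' => _ _ o'.
have o1 := o 0 1 isT; have o1' := o' 0 1 isT.
have d : (lam 0 - lam 1) ^+ 2 = (lam' 0 - lam' 1) ^+ 2.
  have e : forall a b : R, (a - b) ^+ 2 = 2 * (a ^+ 2 + b ^+ 2) - (a + b) ^+ 2.
    by move=> a b; ring.
  by rewrite !e s1 s2.
have : lam 0 - lam 1 = lam' 0 - lam' 1.
  by apply/eqP; rewrite -(eqrXn2 (n:=2)) ?subr_ge0 // d.
move=> h; split; lra.
Qed.

End S.

Lemma fieldaux (F : fieldType) (a b c : F) : b != 0 -> c * a = a / b * (c * b).
Proof. by move=> nb; field. Qed.

Theorem theorem3 (R : realType) (s : \bar R)
    (rho rho' X X' : 'M[R[i]]_2)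
    (lam lam' : 'I_2 -> R) (psi psi' : 'I_2 -> 'cV[R[i]]_2) :
  (s <= 0)%E ->
  density_matrix rho -> density_matrix rho' ->
  \tr (rho *m rho) = \tr (rho' *m rho') ->
  is_hermitian X -> is_hermitian X' -> X != 0 -> X' != 0 ->
  rho' *m X' - X' *m rho' != 0 ->
  ordered_eigenbasis rho lam psi -> ordered_eigenbasis rho' lam' psi' ->
  I_s s rho lam psi X =
    (`|braket (psi 0) X (psi 1)| ^+ 2 / `|braket (psi' 0) X' (psi' 1)| ^+ 2)
    * I_s s rho' lam' psi' X'.
Proof.
move=> hs Hd Hd' h2 hX hX' _ _ hc He He'.
have [e0 e1] := @eig_eq R rho rho' lam lam' psi psi' Hd Hd' h2 He He'.
rewrite (@I_formula _ _ _ _ Hd He s X hs hX) (@I_formula _ _ _ _ Hd' He' s X' hs hX') -e0 -e1.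
rewrite !braketE -/(Y _ psi X) -/(Y _ psi' X').
rewrite (@Y_herm _ _ _ hX) (@Y_herm _ _ _ hX') -!normCK.
have nz : `|Y _ psi' X' 0 1| ^+ 2 != 0.
  rewrite expf_eq0 /= normr_eq0; apply/eqP => h.
  by move/eqP: hc; apply; apply: (@comm0 _ _ _ _ He' _ hX' h).
exact: fieldaux.
Qed.
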